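(* Consider an execution of the convergence algorithm described in the context, with $n>5f$ robots of which at most $f$ are Byzantine and $m$ are correct, in the CORDA model under a fully asynchronous scheduler. Let $b>0$. Let $D_i$ be a destination computed by a correct robot $i$ in a cycle started at time $t$ (i.e., whose Look occurred at time $t$). If $D_i<\min UD(t)+b$, then at time $t$ at least $m-2f$ correct robots are located at positions $<\min UD(t)+2b$.
   Context: Setting: $n$ robots on the real line, at most $f$ Byzantine (arbitrary positions). Robots are anonymous, oblivious, have no common orientation, and have unlimited visibility with strong multiplicity detection. Correct robots run Look–Compute–Move cycles in the CORDA model, where phases of different robots interleave arbitrarily. Algorithm: with snapshot sorted $P_1\le\dots\le P_n$ and own position $x_i$, robot $i$ is elected iff $x_i\le P_{f+1}$ or $x_i\ge P_{n-f}$. If elected, its destination is the midpoint of $\min(x_i,P_{2f+1})$ and $\max(x_i,P_{n-2f})$, which is the center of $trim^i_{2f}(P)$ (remove, among the $2f$ smallest positions, those below $x_i$, and, among the $2f$ largest positions, those above $x_i$). Notation: the destination of a correct robot at time $t$ is the last destination it computed at or before $t$ (its position if none). $UD(t)$ is the multiset union of positions and destinations of all correct robots at time $t$. *)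

(* Defs.v *)
From HB Require Import structures.
From mathcomp Require Import all_boot all_order all_algebra.
Set Implicit Arguments. Unset Strict Implicit. Unset Printing Implicit Defensive.
Import Order.TTheory GRing.Theory Num.Theory.
Local Open Scope ring_scope.

Section Defs.
Variable R : realFieldType.

(* P_k of the sorted multiset s, 1-based: P_1 <= ... <= P_(size s). *)
Definition kth (s : seq R) (k : nat) : R := nth 0 (sort <=%R s) k.-1.

Definition seq_min (s : seq R) : R := \big[Num.min/head 0 s]_(x <- s) x.

Definition elected (f : nat) (P : seq R) (x : R) : bool :=
  (x <= kth P f.+1) || (kth P (size P - f)%N <= x).

(* Destination computed by the algorithm: Some (center of trim^i_(2f)(P))
   if elected, None (no destination computed, robot does not move) otherwise. *)
Definition algo_dest (f : nat) (P : seq R) (x : R) : option R :=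
  if elected f P x then
    Some ((Num.min x (kth P (2 * f).+1) + Num.max x (kth P (size P - 2 * f)%N)) / 2)
  else None.

Definition snap (m k : nat) (pos : 'I_m -> R -> R) (bpos : 'I_k -> R -> R) (t : R)
  : seq R := [seq pos j t | j : 'I_m] ++ [seq bpos j t | j : 'I_k].

End Defs.

(* An execution of the algorithm in CORDA (fully asynchronous scheduler),
   with m correct robots (indexed 'I_m) and k Byzantine robots (indexed 'I_k),
   algorithm parameter f. Correct robot i performs cycles c = 0,1,2,...:
   Look at look i c, Compute at comp i c, Move during [comp i c, mend i c]. *)
Record execution (R : realFieldType) (m k f : nat) := Execution {
  pos  : 'I_m -> R -> R;
  bpos : 'I_k -> R -> R;
  look : 'I_m -> nat -> R;
  comp : 'I_m -> nat -> R;
  mend : 'I_m -> nat -> R;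
  dest : 'I_m -> R -> R;
  ex_look_comp : forall i c, look i c <= comp i c;
  ex_comp_end  : forall i c, comp i c <= mend i c;
  ex_end_look  : forall i c, mend i c <= look i c.+1;
  ex_look_lt   : forall i c, look i c < look i c.+1;
  (* fairness: every correct robot is activated infinitely often *)
  ex_fair : forall i T, exists c, T < look i c;
  ex_before : forall i t, t <= look i 0%N -> pos i t = pos i (look i 0%N);
  ex_wait : forall i c t, look i c <= t <= comp i c -> pos i t = pos i (look i c);
  ex_idle : forall i c t, mend i c <= t <= look i c.+1 -> pos i t = pos i (mend i c);
  (* during the Move phase, a robot moves on the segment towards its computed
     destination (possibly stopping early); it stays put if none was computed *)
  ex_move : forall i c t, comp i c <= t <= mend i c ->
    match algo_dest f (snap pos bpos (look i c)) (pos i (look i c)) return Prop with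
    | None => pos i t = pos i (comp i c)
    | Some d => Num.min (pos i (comp i c)) d <= pos i t <= Num.max (pos i (comp i c)) d
    end;
  (* destination at time t = last destination computed at or before t,
     or the current position if none *)
  ex_dest : forall i t,
    ((forall c, comp i c <= t ->
        algo_dest f (snap pos bpos (look i c)) (pos i (look i c)) = None)
       /\ dest i t = pos i t)
    \/ (exists c, comp i c <= t /\
         algo_dest f (snap pos bpos (look i c)) (pos i (look i c)) = Some (dest i t) /\
         forall c', (c < c')%N -> comp i c' <= t ->
           algo_dest f (snap pos bpos (look i c')) (pos i (look i c')) = None)
}.

Section ExecDefs.
Variables (R : realFieldType) (m k f : nat) (e : execution R m k f).

Definition cycle_dest (i : 'I_m) (c : nat) : option R :=
  algo_dest f (snap (pos e) (bpos e) (look e i c)) (pos e i (look e i c)).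

Definition UD (t : R) : seq R :=
  [seq pos e j t | j : 'I_m] ++ [seq dest e j t | j : 'I_m].

Definition minUD (t : R) : R := seq_min (UD t).
End ExecDefs.

(* Main.v *)
Require Import Defs.
From HB Require Import structures.
From mathcomp Require Import all_boot all_order all_algebra.
From mathcomp Require Import lra zify.
Import Order.TTheory GRing.Theory Num.Theory.
Local Open Scope ring_scope.

Lemma count_img (T : finType) (U : Type) (F : T -> U) (p : pred U) :
  count p [seq F j | j : T] = #|[set j | p (F j)]|.
Proof.
rewrite count_map cardsE cardE -deprecated_filter_index_enum size_filter.
rewrite (@eq_filter _ _ predT) // filter_predT.
rewrite /index_enum unlock /=.
by apply: eq_count.
Qed.

Lemma sort_count (R : realFieldType) (s : seq R) (j : nat) (v : R) :
  (j < size s)%N -> nth 0 (sort <=%R s) j < v -> (j.+1 <= count (fun x : R => (x < v)%R) s)%N.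
Proof.
move=> Hj Hv.
rewrite -((permP (permEl (perm_sort <=%R s))) (fun x : R => (x < v)%R)).
set ss := sort _ _.
have Hs : size ss = size s by rewrite size_sort.
have So : sorted <=%R ss by apply: sort_sorted; exact: le_total.
rewrite -(cat_take_drop j.+1 ss) count_cat.
have -> : count (fun x : R => (x < v)%R) (take j.+1 ss) = j.+1.
  have Hall : all (fun x : R => (x < v)%R) (take j.+1 ss).
  2: by move: Hall; rewrite all_count size_takel ?Hs // => /eqP.
  apply/(all_nthP 0) => i Hi.
  rewrite size_takel ?Hs // in Hi.
  rewrite nth_take //.
  apply: le_lt_trans Hv.
  apply: le_sorted_leq_nth => //; rewrite inE ?Hs; lia.
by rewrite leq_addr.
Qed.

Lemma bigmin_le (R : realFieldType) (idx : R) (s : seq R) (y : R) :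
  y \in s -> \big[Num.min/idx]_(z <- s) z <= y.
Proof.
elim: s => [//|a s IH]; rewrite inE big_cons => /orP [/eqP ->|Hy].
  by rewrite ge_min lexx.
by rewrite ge_min IH ?orbT.
Qed.

Theorem lemma12 (R : realFieldType) (m k f : nat) (e : execution R m k f)
  (b : R) (i : 'I_m) (c : nat) (Di : R) :
  (k <= f)%N -> (5 * f < m + k)%N -> 0 < b ->
  cycle_dest e i c = Some Di ->
  Di < minUD e (look e i c) + b ->
  (m - 2 * f <= #|[set j : 'I_m | (pos e j (look e i c) < minUD e (look e i c) + 2 * b)%R]|)%N.
Proof.
move=> Hkf Hn Hb Hcd HDi.
set t := look e i c in Hcd HDi *.
set M := minUD e t in HDi *.
set P := snap (pos e) (bpos e) t.
have HM : forall j, M <= pos e j t.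
  move=> j; apply: bigmin_le; rewrite mem_cat; apply/orP; left.
  by apply: map_f; rewrite mem_enum.
have HsP : size P = (m + k)%N.
  by rewrite /P /snap size_cat !size_image !card_ord.
have Hcnt : forall v : R, (count (fun x : R => (x < v)%R) P <=
     #|[set j : 'I_m | (pos e j t < v)%R]| + k)%N.
  move=> v; rewrite /P /snap count_cat !count_img leq_add2l.
  by rewrite -[X in (_ <= X)%N](card_ord k) max_card.
have HA : M <= kth P (2 * f).+1.
  rewrite leNgt; apply/negP => Hlt.
  have := @sort_count R P (2 * f)%N M _ Hlt; rewrite HsP => /(_ ltac:(lia)).
  have := Hcnt M.
  have -> : #|[set j : 'I_m | (pos e j t < M)%R]| = 0%N.
    apply/eqP; rewrite cards_eq0; apply/eqP/setP => j; rewrite !inE.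
    by rewrite ltNge HM.
  lia.
move: Hcd; rewrite /cycle_dest -/t -/P /algo_dest.
case: (elected _ _ _) => // -[] HD.
set a := Num.min _ _ in HD; set B := Num.max _ _ in HD.
have ha : M <= a by rewrite /a le_min HM HA.
have hb : kth P (size P - 2 * f) <= B by rewrite /B le_max lexx orbT.
have Hlt : kth P (size P - 2 * f) < M + 2 * b by lra.
have := @sort_count R P (size P - 2 * f).-1 _ _ Hlt.
rewrite HsP => /(_ ltac:(lia)).
have := Hcnt (M + 2 * b).
lia.
Qed.
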